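(* (i) For every combinatorial line $U\in \mathscr{L}$ the pair $\Pi^U=(P^U, \psi_{U})$ is a picture over $G$ with $\Pi^U_x=\psi_U^{-1}(x)=U$. (ii) If $U, V\in \mathscr{L}$ are distinct, then $P^U\cap P^V=U\cap V$.
   Context: Let $k\ge 3$ and let $G$ be a $k$-uniform hypergraph. A $k$-element subset $L$ of a Hales-Jewett cube $[k]^m$ is a quasiline if for every coordinate the entries of the points of $L$ in that coordinate are either all identical or mutually distinct. Over an arbitrary finite alphabet $A$, a combinatorial line in $A^n$ is the image of a map $\eta\colon A\to A^n$ given by a partition $[n]=C\,\dot\cup\, M$ with $M\neq\emptyset$ and a function $g\colon C\to A$, where the $i$-th coordinate of $\eta(a)$ is $g(i)$ for $i\in C$ and $a$ for $i\in M$ (such $\eta$ is a combinatorial embedding). A picture over $G$ is a pair $\Pi=(P,\psi)$ with $P\subseteq [k]^m$ and $\psi\colon P\to V(G)$ such that every quasiline $L\subseteq P$ is a combinatorial line with $\psi[L]\in E(G)$; for a vertex $x$ of $G$ the music line is $\Pi_x=\psi^{-1}(x)$. Now let $\Pi=(P,\psi_\Pi)$ be a picture over $G$ with $P\subseteq[k]^m$, let $x$ be a vertex of $G$, and, viewing the music line $\Pi_x$ as an alphabet, let $\mathscr{L}$ be a collection of combinatorial lines in the $n$-dimensional Hales-Jewett cube $\Pi_x^n$. For every $U\in\mathscr{L}$ let $\eta_U\colon \Pi_x\to \Pi_x^n$ be the combinatorial embedding with image $U$, given by a partition $[n]=C\,\dot\cup\, M$ ($M\ne\emptyset$) and $g\colon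 C\to\Pi_x$. Let $\eta_U^+\colon [k]^m\to([k]^m)^n=[k]^{mn}$ be its extension defined by the same data: the $i$-th block of $\eta_U^+(a)$ is $g(i)$ for $i\in C$ and $a$ for $i\in M$ (this is a combinatorial embedding over the alphabet $[k]$, and it maps quasilines to quasilines and combinatorial lines to combinatorial lines). Set $P^U=\eta_U^+(P)$ and $\psi_U=\psi_\Pi\circ(\eta_U^+|_{P})^{-1}\colon P^U\to V(G)$. *)

(* Defs.v *)
From mathcomp Require Import all_boot.
Set Implicit Arguments. Unset Strict Implicit. Unset Printing Implicit Defensive.

(* Points of the Hales-Jewett cube A^I are finite functions {ffun I -> A};
   the coordinate set I is an arbitrary finite type (I = 'I_m for [k]^m,
   I = 'I_n * 'I_m for ([k]^m)^n = [k]^{mn}). *)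

(* combinatorial embedding given by the partition I = C u M (C = ~: M) and
   g : C -> A (values of g on M are ignored) *)
Definition comb_emb (A I : finType) (M : {set I}) (g : I -> A) (a : A)
  : {ffun I -> A} := [ffun i => if i \in M then a else g i].

Definition comb_line (A I : finType) (L : {set {ffun I -> A}}) : Prop :=
  exists (M : {set I}) (g : I -> A),
    M != set0 /\ L = [set comb_emb M g a | a : A].

Definition quasiline (k : nat) (I : finType) (L : {set {ffun I -> 'I_k}}) : Prop :=
  #|L| = k /\
  forall i : I,
    (forall a b, a \in L -> b \in L -> a i = b i) \/
    (forall a b, a \in L -> b \in L -> a i = b i -> a = b).

(* picture (P, psi) over the hypergraph with edge set E; psi is given as a
   total function whose values outside P are irrelevant *)
Definition picture (k : nat) (I V : finType) (E : {set {set V}})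
  (P : {set {ffun I -> 'I_k}}) (psi : {ffun I -> 'I_k} -> V) : Prop :=
  forall L : {set {ffun I -> 'I_k}},
    L \subset P -> quasiline L -> comb_line L /\ psi @: L \in E.

Definition music_line (k : nat) (I V : finType) (P : {set {ffun I -> 'I_k}})
  (psi : {ffun I -> 'I_k} -> V) (x : V) : {set {ffun I -> 'I_k}} :=
  [set a in P | psi a == x].

Definition music_alph (k : nat) (I V : finType) (P : {set {ffun I -> 'I_k}})
  (psi : {ffun I -> 'I_k} -> V) (x : V) : finType :=
  {a : {ffun I -> 'I_k} | a \in music_line P psi x}.

(* extension eta^+ : [k]^m -> ([k]^m)^n = [k]^('I_n * 'I_m) defined by the
   same data (M, g) *)
Definition ext_emb (k m n : nat) (M : {set 'I_n}) (g : 'I_n -> {ffun 'I_m -> 'I_k})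
  (a : {ffun 'I_m -> 'I_k}) : {ffun ('I_n * 'I_m) -> 'I_k} :=
  [ffun ij => if ij.1 \in M then a ij.2 else g ij.1 ij.2].

Definition flat (k m n : nat) (w : {ffun 'I_n -> {ffun 'I_m -> 'I_k}})
  : {ffun ('I_n * 'I_m) -> 'I_k} := [ffun ij => w ij.1 ij.2].

Definition lift_set (k m n : nat) (V : finType) (P : {set {ffun 'I_m -> 'I_k}})
  (psi : {ffun 'I_m -> 'I_k} -> V) (x : V)
  (U : {set {ffun 'I_n -> music_alph P psi x}}) : {set {ffun ('I_n * 'I_m) -> 'I_k}} :=
  [set flat [ffun i => val (w i)] | w : {ffun 'I_n -> music_alph P psi x} in U].

Definition ext_set (k m n : nat) (M : {set 'I_n}) (g : 'I_n -> {ffun 'I_m -> 'I_k})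
  (P : {set {ffun 'I_m -> 'I_k}}) : {set {ffun ('I_n * 'I_m) -> 'I_k}} :=
  [set ext_emb M g a | a in P].

(* psi_U = psi o (eta_U^+|_P)^{-1} on P^U; outside P^U its value (here the
   default d) is irrelevant *)
Definition ext_psi (k m n : nat) (V : finType) (d : V) (M : {set 'I_n})
  (g : 'I_n -> {ffun 'I_m -> 'I_k}) (P : {set {ffun 'I_m -> 'I_k}})
  (psi : {ffun 'I_m -> 'I_k} -> V) (y : {ffun ('I_n * 'I_m) -> 'I_k}) : V :=
  if [pick a in P | ext_emb M g a == y] is Some a then psi a else d.

(* Main.v *)
Require Import Defs.
From mathcomp Require Import all_boot.
Set Implicit Arguments. Unset Strict Implicit. Unset Printing Implicit Defensive.

Section S.
Variables (k m n : nat).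

Lemma ext_inj (M : {set 'I_n}) (g : 'I_n -> {ffun 'I_m -> 'I_k}) i0 :
  i0 \in M -> injective (ext_emb M g).
Proof.
move=> hi0 a b /ffunP e; apply/ffunP => j.
by have := e (i0, j); rewrite !ffunE /= hi0.
Qed.

Lemma ext_psi_E (V : finType) (d : V) (M : {set 'I_n}) (g : 'I_n -> {ffun 'I_m -> 'I_k})
  (P : {set {ffun 'I_m -> 'I_k}}) (psi : {ffun 'I_m -> 'I_k} -> V) i0 a :
  i0 \in M -> a \in P -> ext_psi d M g P psi (ext_emb M g a) = psi a.
Proof.
move=> hi0 Pa; rewrite /ext_psi; case: pickP => [a' /andP[Pa' /eqP e]| H].
  by rewrite (ext_inj hi0 e).
by have := H a; rewrite Pa eqxx.
Qed.

Lemma picture_ext (V : finType) (E : {set {set V}}) (d : V) (M : {set 'I_n})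
  (g : 'I_n -> {ffun 'I_m -> 'I_k}) (P : {set {ffun 'I_m -> 'I_k}})
  (psi : {ffun 'I_m -> 'I_k} -> V) i0 :
  i0 \in M -> picture E P psi -> picture E (ext_set M g P) (ext_psi d M g P psi).
Proof.
move=> hi0 hp L sLP [cardL qL].
set L' := [set a in P | ext_emb M g a \in L].
have LE : L = ext_emb M g @: L'.
  apply/setP => y; apply/idP/imsetP.
  - move=> yL; have := subsetP sLP y yL; case/imsetP => a Pa ya.
    by exists a => //; rewrite inE Pa -ya yL.
  - by case=> a; rewrite inE => /andP[_ ?] ->.
have sL'P : L' \subset P by apply/subsetP=> a; rewrite inE => /andP[].
have qL' : quasiline L'.
  split.
    have <- : #|ext_emb M g @: L'| = #|L'| by rewrite card_imset //; exact: ext_inj hi0.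
    by rewrite -LE.
  move=> j; case: (qL (i0, j)) => [h|h]; [left|right] => a b;
    rewrite !inE => /andP[_ aL] /andP[_ bL].
    by have := h _ _ aL bL; rewrite /ext_emb !ffunE /= hi0.
  by move=> ab; apply: (ext_inj hi0); apply: (h _ _ aL bL); rewrite /ext_emb !ffunE /= hi0 ab.
have [[M' [g' [M'0 L'E]]] EL'] := hp L' sL'P qL'.
split.
  exists [set ij | (ij.1 \in M) && (ij.2 \in M')],
    (fun ij => if ij.1 \in M then g' ij.2 else g ij.1 ij.2).
  split.
    case/set0Pn: M'0 => j0 hj0; apply/set0Pn; exists (i0, j0).
    by rewrite inE /= hi0 hj0.
  rewrite LE L'E -imset_comp; apply: eq_imset => a /=.
  apply/ffunP => -[i j]; rewrite !ffunE /= inE /=.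
  by case: (i \in M); case: (j \in M').
have -> : ext_psi d M g P psi @: L = psi @: L'.
  rewrite LE -imset_comp; apply: eq_in_imset => a; rewrite inE => /andP[Pa _] /=.
  exact: ext_psi_E hi0 Pa.
done.
Qed.

Variables (V : finType) (P : {set {ffun 'I_m -> 'I_k}}) (psi : {ffun 'I_m -> 'I_k} -> V)
  (x : V).

Lemma alph_psi (a : music_alph P psi x) : val a \in P /\ psi (val a) = x.
Proof. by have := valP a; rewrite inE => /andP[? /eqP]. Qed.

Lemma music_ext (U : {set {ffun 'I_n -> music_alph P psi x}}) (M0 : {set 'I_n})
  (g0 : 'I_n -> music_alph P psi x) i0 :
  i0 \in M0 -> U = [set comb_emb M0 g0 a | a : music_alph P psi x] ->
  music_line (ext_set M0 (fun i => val (g0 i)) P)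
             (ext_psi x M0 (fun i => val (g0 i)) P psi) x = lift_set U.
Proof.
move=> hi0 hU; apply/setP => y; rewrite inE; apply/andP/imsetP.
- case=> /imsetP[a Pa ->]; rewrite (ext_psi_E _ _ _ hi0 Pa) => /eqP psa.
  have am : a \in music_line P psi x by rewrite inE Pa psa eqxx.
  exists (comb_emb M0 g0 (Sub a am : music_alph P psi x)).
    by rewrite hU; apply/imsetP; exists (Sub a am : music_alph P psi x).
  apply/ffunP => -[i j]; rewrite !ffunE /=.
  by case: (i \in M0).
- case=> w; rewrite hU => /imsetP[a _ ->] ->.
  have [Pa pa] := alph_psi a.
  have -> : flat [ffun i => val (comb_emb M0 g0 a i)]
           = ext_emb M0 (fun i => val (g0 i)) (val a).
    apply/ffunP => -[i j]; rewrite !ffunE /=.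
    by case: (i \in M0).
  split; first by apply/imsetP; exists (val a).
  by rewrite (ext_psi_E _ _ _ hi0 Pa) pa.
Qed.

Lemma key (U W : {set {ffun 'I_n -> music_alph P psi x}}) MU MW
  (gU gW : 'I_n -> music_alph P psi x) a b :
  MU != set0 -> MW != set0 ->
  U = [set comb_emb MU gU c | c : music_alph P psi x] ->
  W = [set comb_emb MW gW c | c : music_alph P psi x] -> U != W ->
  ext_emb MU (fun i => val (gU i)) a = ext_emb MW (fun i => val (gW i)) b ->
  psi a = x.
Proof.
move=> /set0Pn[i0 hi0] /set0Pn[i1 hi1] hU hW nUW /ffunP e.
case: (boolP [exists i, (i \in MU) && (i \notin MW)]).
  case/existsP => i /andP[iU iW].
  have -> : a = val (gW i).
    apply/ffunP => j; have := e (i, j); rewrite !ffunE /= iU.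
    by rewrite (negbTE iW).
  by case: (alph_psi (gW i)).
rewrite negb_exists => /forallP hUW.
case: (boolP [exists i, (i \in MW) && (i \notin MU)]).
  case/existsP => i /andP[iW iU].
  have i0W : i0 \in MW by have := hUW i0; rewrite hi0 /= negbK.
  have -> : a = val (gU i).
    apply/ffunP => j; have := e (i0, j); rewrite !ffunE /= hi0 i0W => ->.
    have := e (i, j); rewrite !ffunE /= iW (negbTE iU) => ->. done.
  by case: (alph_psi (gU i)).
rewrite negb_exists => /forallP hWU.
have eM : MU = MW.
  apply/setP => i; have := hUW i; have := hWU i.
  by case: (i \in MU); case: (i \in MW).
case/negP: nUW; apply/eqP; rewrite hU hW; apply: eq_imset => c.
apply/ffunP => i; rewrite !ffunE -eM.
case: ifP => // iU; apply: val_inj; apply/ffunP => j.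
by have := e (i, j); rewrite !ffunE /= iU -eM iU.
Qed.

End S.

Theorem fact4p4 (k : nat) (hk : 3 <= k) (V : finType) (E : {set {set V}})
  (hE : forall e, e \in E -> #|e| = k)
  (m : nat) (P : {set {ffun 'I_m -> 'I_k}}) (psi : {ffun 'I_m -> 'I_k} -> V)
  (hpic : picture E P psi) (x : V) (n : nat)
  (Ls : {set {set {ffun 'I_n -> music_alph P psi x}}})
  (M : {set {ffun 'I_n -> music_alph P psi x}} -> {set 'I_n})
  (g : {set {ffun 'I_n -> music_alph P psi x}} -> 'I_n -> music_alph P psi x)
  (hL : forall U, U \in Ls ->
     M U != set0 /\ U = [set comb_emb (M U) (g U) a | a : music_alph P psi x]) :
  (forall U, U \in Ls ->
     picture E (ext_set (M U) (fun i => val (g U i)) P)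
               (ext_psi x (M U) (fun i => val (g U i)) P psi) /\
     music_line (ext_set (M U) (fun i => val (g U i)) P)
                (ext_psi x (M U) (fun i => val (g U i)) P psi) x
       = lift_set U) /\
  (forall U W, U \in Ls -> W \in Ls -> U != W ->
     ext_set (M U) (fun i => val (g U i)) P :&: ext_set (M W) (fun i => val (g W i)) P
       = lift_set U :&: lift_set W).
Proof.
split.
  move=> U HU; have [/set0Pn[i0 hi0] hU] := hL U HU.
  split; first exact: picture_ext hi0 hpic.
  exact: music_ext hi0 hU.
move=> U W HU HW nUW.
have [hU0 hU] := hL U HU; have [hW0 hW] := hL W HW.
have [iU hiU] := set0Pn _ hU0; have [iW hiW] := set0Pn _ hW0.
rewrite -(music_ext hiU hU) -(music_ext hiW hW).
apply/setP => y; rewrite !inE; apply/idP/idP.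
  case/andP => /[dup] yU /imsetP[a Pa ya] /[dup] yW /imsetP[b Pb yb].
  have pa : psi a = x.
    by apply: (key (a:=a) (b:=b) hU0 hW0 hU hW nUW); rewrite -ya -yb.
  have pb : psi b = x.
    by apply: (key (a:=b) (b:=a) hW0 hU0 hW hU); [rewrite eq_sym| rewrite -ya -yb].
  apply/andP; split; apply/andP; split => //.
    by rewrite ya (ext_psi_E _ _ _ hiU Pa) pa.
  by rewrite yb (ext_psi_E _ _ _ hiW Pb) pb.
by case/andP => /andP[-> _] /andP[-> _].
Qed.
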